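(* Let $d\ge 3$, let $A$ be a $d$-dimensional $(0,1)$-matrix of order $4$ equivalent to $\mathcal{M}_4^d$, and let $C$ be a filled subcube of $A$. Let $B$ be the $(0,1)$-matrix obtained from $A$ by changing exactly one zero entry lying in $C$ to $1$. Then $\operatorname{per}B>0$.
   Context: $\mathcal{M}_4^d$ has entry $1$ at $\alpha$ iff $\alpha_1+\dots+\alpha_d\equiv 0\pmod 4$, else $0$. Equivalence of matrices: obtained by permuting coordinate positions and/or applying a permutation of $\{0,1,2,3\}$ to a single coordinate, repeatedly. A diagonal is a set of $4$ indices any two of which differ in every coordinate; $\operatorname{per}B=\sum_p\prod_{\alpha\in p}b_\alpha$ over diagonals. Define $p_1,p_2,p_3:\{0,1,2,3\}\to\{0,1\}$ by $p_1(0)=p_1(1)=0,\ p_1(2)=p_1(3)=1$; $p_2(0)=p_2(2)=0,\ p_2(1)=p_2(3)=1$; $p_3(0)=p_3(3)=0,\ p_3(1)=p_3(2)=1$; and $\mu_1(0)=\mu_1(2)=0,\ \mu_1(1)=\mu_1(3)=1$; $\mu_2(0)=\mu_2(1)=0,\ \mu_2(2)=\mu_2(3)=1$; $\mu_3(0)=\mu_3(2)=0,\ \mu_3(1)=\mu_3(3)=1$. $Q_s^d=\{y\in\{0,1\}^d:w(y)\equiv s \pmod 2\}$ ($w$ = Hamming weight). For $\mathcal{E}\in\{1,2,3\}^d$, $s\in\{0,1\}$, $\lambda:Q_s^d\to\{0,1\}$, the block permutation with parameters $(\mathcal{E},\lambda,s)$ is the $(0,1)$-matrix with entry $1$ at $\alpha$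 iff $\bigoplus_i p_{\varepsilon_i}(\alpha_i)=s$ and $\bigoplus_i\mu_{\varepsilon_i}(\alpha_i)\oplus\lambda(p_{\varepsilon_1}(\alpha_1),\dots,p_{\varepsilon_d}(\alpha_d))=0$. Every matrix equivalent to $\mathcal{M}_4^d$ ($d\ge3$) is a block permutation for a unique triple of parameters $(\mathcal{E},\lambda,s)$. For these parameters, the subcubes are the index sets $C_y=\{\alpha:p_{\varepsilon_i}(\alpha_i)=y_i\ \forall i\}$, $y\in\{0,1\}^d$, and $C_y$ is called filled if $w(y)\equiv s\pmod 2$. *)

(* Defs.v *)
From mathcomp Require Import all_boot all_fingroup.
Set Implicit Arguments. Unset Strict Implicit. Unset Printing Implicit Defensive.

Definition idx (d : nat) := {ffun 'I_d -> 'I_4}.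

Definition mat01 (d : nat) := idx d -> bool.

Definition M4 (d : nat) : mat01 d :=
  fun a => (\sum_(i < d) (a i : nat)) %% 4 == 0.

Arguments M4 d : clear implicits.

Definition perm_coords d (s : {perm 'I_d}) (A : mat01 d) : mat01 d :=
  fun a => A [ffun i => a (s i)].
Definition perm_value d (i : 'I_d) (pi : {perm 'I_4}) (A : mat01 d) : mat01 d :=
  fun a => A [ffun j => if j == i then pi (a j) else a j].

Inductive equiv_mat d : mat01 d -> mat01 d -> Prop :=
| equiv_refl A : equiv_mat A A
| equiv_coords A B s : equiv_mat A B -> equiv_mat A (perm_coords s B)
| equiv_value A B i pi : equiv_mat A B -> equiv_mat A (perm_value i pi B).

Definition is_diagonal d (p : {set idx d}) : bool :=
  (#|p| == 4) &&
  [forall a in p, forall b in p, (a != b) ==> [forall i, a i != b i]].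

Definition per d (B : mat01 d) : nat :=
  \sum_(p : {set idx d} | is_diagonal p) \prod_(a in p) (B a : nat).

(* The functions p_eps and mu_eps; eps in {1,2,3} is encoded as 'I_3
   (ordinal k stands for eps = k+1). *)
Definition pf (e : 'I_3) (x : 'I_4) : bool :=
  match val e with
  | 0 => 2 <= x
  | 1 => odd x
  | _ => (x == 1 :> nat) || (x == 2 :> nat)
  end.
Definition muf (e : 'I_3) (x : 'I_4) : bool :=
  match val e with
  | 0 => odd x
  | 1 => 2 <= x
  | _ => odd x
  end.

Definition pvec d (E : {ffun 'I_d -> 'I_3}) (a : idx d) : {ffun 'I_d -> bool} :=
  [ffun i => pf (E i) (a i)].

Definition xorall d (f : 'I_d -> bool) : bool := \big[addb/false]_(i < d) f i.

Definition inQ d (s : bool) (y : {ffun 'I_d -> bool}) : bool :=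
  odd #|[set i | y i]| == s.

(* Block permutation with parameters (E, lambda, s); lambda is only ever
   evaluated on Q_s^d. *)
Definition block_perm d (E : {ffun 'I_d -> 'I_3})
  (lam : {ffun 'I_d -> bool} -> bool) (s : bool) : mat01 d :=
  fun a => (xorall (fun i => pf (E i) (a i)) == s) &&
           (xorall (fun i => muf (E i) (a i)) (+) lam (pvec E a) == false).

Definition subcube d (E : {ffun 'I_d -> 'I_3}) (y : {ffun 'I_d -> bool}) : pred (idx d) :=
  fun a => pvec E a == y.

(* Main.v *)
Require Import Defs.
From mathcomp Require Import all_boot all_fingroup zify.
Set Implicit Arguments. Unset Strict Implicit. Unset Printing Implicit Defensive.
Definition mk4 (n : nat) : 'I_4 := @Ordinal 4 (n %% 4) (ltn_pmod n (isT : 0 < 4)).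
Definition sg (e : 'I_3) (x : 'I_4) : 'I_4 :=
  mk4 (match val e with 0 => if odd x then x.-1 else x.+1 | 1 => (x+2) | _ => 3 - x end).
Definition ot (e : 'I_3) (x : 'I_4) : 'I_4 :=
  mk4 (match val e with 0 => (x+2) | 1 => (x + 1) | _ => if odd x then x.-1 else x.+1 end).
Definition w (t : bool) e x := if t then sg e (ot e x) else ot e x.
Arguments w : simpl never.
Lemma tab e x t :
  [&& pf e (sg e x) == pf e x, muf e (sg e x) == ~~ muf e x,
      pf e (w t e x) == ~~ pf e x, muf e (w t e x) == t (+) muf e (ot e x),
      x != sg e x, x != w t e x, sg e x != w t e x & w t e x != w (~~ t) e x].
Proof.
case: e => [[|[|[|e]]] He] //; case: x => [[|[|[|[|x]]]] Hx] //; by case: t.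
Qed.

Definition alldiff d (a b : idx d) := [forall i, a i != b i].
Definition quad d (B : mat01 d) := exists a b c e,
  [/\ [/\ B a, B b, B c & B e], [/\ alldiff a b, alldiff a c & alldiff a e] &
      [/\ alldiff b c, alldiff b e & alldiff c e]].

Lemma alldiff_sym d (a b : idx d) : alldiff a b = alldiff b a.
Proof. by apply/forallP/forallP => H i; rewrite eq_sym. Qed.

Lemma alldiff_neq d (a b : idx d) : 0 < d -> alldiff a b -> (a == b) = false.
Proof.
move=> d0 /forallP H; apply/negbTE/eqP => eab.
by move: (H (Ordinal d0)); rewrite eab eqxx.
Qed.

Lemma quad_per d (B : mat01 d) : 0 < d -> quad B -> 0 < per B.
Proof.
move=> d0 [a [b [c [e [[Ba Bb Bc Be] [ab ac ae] [bc be ce]]]]]].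
have nab := alldiff_neq d0 ab; have nac := alldiff_neq d0 ac.
have nae := alldiff_neq d0 ae; have nbc := alldiff_neq d0 bc.
have nbe := alldiff_neq d0 be; have nce := alldiff_neq d0 ce.
set p := [set z | z \in [:: a; b; c; e]].
have Dp : is_diagonal p.
  apply/andP; split.
    have -> : #|p| = #|[:: a; b; c; e]| by apply: eq_card => z; rewrite inE.
    by rewrite (card_uniqP _) //= !inE nab nac nae nbc nbe nce.
  apply/forallP => u; apply/implyP; rewrite !inE => /or4P[]/eqP->;
  apply/forallP => v; apply/implyP; rewrite !inE => /or4P[]/eqP->;
  rewrite ?eqxx //=; apply/implyP => _;
  by rewrite -/(alldiff _ _) // alldiff_sym.
rewrite /per (bigD1 p) //=.
rewrite (_ : \prod_(x in p) (B x : nat) = 1) //.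
by rewrite big1 // => z; rewrite !inE => /or4P[]/eqP->; rewrite ?Ba ?Bb ?Bc ?Be.
Qed.

Lemma quad_transport d (B : mat01 d) (f g : idx d -> idx d) :
  cancel f g -> cancel g f -> (forall a b, alldiff (f a) (f b) = alldiff a b) ->
  quad (fun a => B (f a)) <-> quad B.
Proof.
move=> fK gK Hf; split.
  move=> [a [b [c [e [[Ba Bb Bc Be] [ab ac ae] [bc be ce]]]]]].
  by exists (f a), (f b), (f c), (f e); rewrite !Hf.
move=> [a [b [c [e [[Ba Bb Bc Be] [ab ac ae] [bc be ce]]]]]].
exists (g a), (g b), (g c), (g e); rewrite !gK; split => //;
by split; rewrite -Hf !gK.
Qed.

Lemma equiv_quad d (X Y : mat01 d) : equiv_mat X Y -> (quad X <-> quad Y).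
Proof.
elim=> {Y} [//| A B s _ IH | A B i pi _ IH]; rewrite IH.
  rewrite /perm_coords (@quad_transport _ B (fun a => [ffun i => a (s i)])
     (fun a => [ffun i => a ((s^-1)%g i)])) //.
  - by move=> a; apply/ffunP => i; rewrite !ffunE permKV.
  - by move=> a; apply/ffunP => i; rewrite !ffunE permK.
  move=> a b; apply/forallP/forallP => H j; rewrite ?ffunE //.
  by have := H ((s^-1)%g j); rewrite !ffunE permKV.
rewrite /perm_value (@quad_transport _ B
     (fun a => [ffun j => if j == i then pi (a j) else a j])
     (fun a => [ffun j => if j == i then (pi^-1)%g (a j) else a j])) //.
- by move=> a; apply/ffunP => j; rewrite !ffunE; case: eqP => // ->; rewrite permK.
- by move=> a; apply/ffunP => j; rewrite !ffunE; case: eqP => // ->; rewrite permKV.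
move=> a b; apply/forallP/forallP => H j; move: (H j); rewrite !ffunE;
  by case: (j == i); rewrite ?(inj_eq perm_inj).
Qed.

Lemma sum4 (x y z u : 'I_4) : x != y -> x != z -> x != u -> y != z -> y != u -> z != u ->
  x + y + z + u = 6.
Proof.
case: x => [[|[|[|[|?]]]] ?] //; case: y => [[|[|[|[|?]]]] ?] //;
case: z => [[|[|[|[|?]]]] ?] //; case: u => [[|[|[|[|?]]]] ?] //.
Qed.

Lemma M4_odd_noquad d : odd d -> ~ quad (M4 d).
Proof.
move=> od [a [b [c [e [[Ba Bb Bc Be] [ab ac ae] [bc be ce]]]]]].
move: ab ac ae bc be ce => /forallP ab /forallP ac /forallP ae /forallP bc /forallP be /forallP ce.
have S : \sum_(i < d) (a i : nat) + \sum_(i < d) (b i : nat) + \sum_(i < d) (c i : nat)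
   + \sum_(i < d) (e i : nat) = 6 * d.
  rewrite -!big_split /= (eq_bigr (fun _ => 6)); last first.
    by move=> i _; apply: sum4.
  by rewrite big_const_ord iter_addn_0 mulnC.
move: Ba Bb Bc Be; rewrite /M4 => /eqP Ba /eqP Bb /eqP Bc /eqP Be.
have := odd_double_half d; rewrite od -addnn => Hd.
lia.
Qed.

Lemma sum_if n m u v : \sum_(i < n) (if i < m then u else v) = u * minn m n + v * (n - m).
Proof.
elim: n => [|n IH]; first by rewrite big_ord0; lia.
rewrite big_ord_recr /= IH; case: (ltnP n m) => H.
  have ->: minn m n.+1 = n.+1 by lia.
  have ->: n - m = 0 by lia.
  have ->: n.+1 - m = 0 by lia.
  by rewrite mulnS; lia.
have ->: minn m n.+1 = m by lia.
have ->: n.+1 - m = (n - m).+1 by lia.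
by rewrite mulnS; lia.
Qed.

Definition mkp d (u v : nat) : idx d := [ffun i : 'I_d => if i < d./2 then mk4 u else mk4 v].

Lemma mkpM4 d u v : ~~ odd d -> (u %% 4 + v %% 4) %% 4 = 0 -> M4 d (mkp d u v).
Proof.
move=> ev Huv; rewrite /M4.
rewrite (eq_bigr (fun i : 'I_d => if i < d./2 then u %% 4 else v %% 4)); last first.
  by move=> i _; rewrite ffunE; case: ifP.
rewrite sum_if; have := odd_double_half d; rewrite (negbTE ev) -addnn add0n => Hd.
apply/eqP; lia.
Qed.

Lemma mkp_diff d u v u' v' : u %% 4 != u' %% 4 -> v %% 4 != v' %% 4 ->
  alldiff (mkp d u v) (mkp d u' v').
Proof. by move=> H1 H2; apply/forallP => i; rewrite !ffunE; case: ifP. Qed.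

Lemma M4_even_quad d : ~~ odd d -> quad (M4 d).
Proof.
move=> ev; exists (mkp d 0 0), (mkp d 1 3), (mkp d 2 2), (mkp d 3 1).
by split; split; rewrite ?mkpM4 ?mkp_diff.
Qed.

Ltac brute e x := case: e => [[|[|[|?]]] ?] //; case: x => [[|[|[|[|?]]]] ?] //.
Lemma n1 e x : (x == sg e x) = false. Proof. by brute e x. Qed.
Lemma n1' e x : (sg e x == x) = false. Proof. by rewrite eq_sym n1. Qed.
Lemma n2 e x t : (x == w t e x) = false. Proof. by brute e x; case: t. Qed.
Lemma n2' e x t : (w t e x == x) = false. Proof. by rewrite eq_sym n2. Qed.
Lemma n3 e x t : (sg e x == w t e x) = false. Proof. by brute e x; case: t. Qed.
Lemma n3' e x t : (w t e x == sg e x) = false. Proof. by rewrite eq_sym n3. Qed.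
Lemma n4 e x t : (w t e x == w (~~ t) e x) = false. Proof. by brute e x; case: t. Qed.
Lemma n4' e x t : (w (~~ t) e x == w t e x) = false. Proof. by rewrite eq_sym n4. Qed.
Lemma n5 e x : (w false e x == w true e x) = false. Proof. exact: n4. Qed.
Lemma n5' e x : (w true e x == w false e x) = false. Proof. by rewrite eq_sym n5. Qed.
Lemma pf_sg e x : pf e (sg e x) = pf e x. Proof. by brute e x. Qed.
Lemma muf_sg e x : muf e (sg e x) = ~~ muf e x. Proof. by brute e x. Qed.
Lemma pf_w e x t : pf e (w t e x) = ~~ pf e x. Proof. by brute e x; case: t. Qed.
Lemma muf_w e x t : muf e (w t e x) = t (+) muf e (ot e x). Proof. by brute e x; case: t. Qed.

Lemma xorallD d (f g : 'I_d -> bool) : xorall (fun i => f i (+) g i) = xorall f (+) xorall g.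
Proof. by rewrite /xorall big_split. Qed.

Lemma xorall_tog d (f g : 'I_d -> bool) k b :
  (forall i, g i = ((i == k) && b) (+) f i) -> xorall g = b (+) xorall f.
Proof.
move=> H; rewrite (_ : xorall g = xorall (fun i => ((i == k) && b) (+) f i)); last first.
  by apply: eq_bigr => i _; rewrite H.
rewrite xorallD; congr (_ (+) _).
by rewrite /xorall (bigD1 k) //= eqxx big1 ?addbF // => i /negbTE ->.
Qed.

Lemma xorall_card d (f : 'I_d -> bool) : xorall f = odd #|[set i | f i]|.
Proof.
rewrite -sum1dep_card big_mkcond /= (big_morph odd oddD (erefl : odd 0 = false)) /xorall.
by apply: eq_bigr => i _; case: (f i).
Qed.

Definition pA d (E : {ffun 'I_d -> 'I_3}) (x : idx d) (k0 : 'I_d) (ph : bool) : idx d :=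
  [ffun i => if ph && (i == k0) then sg (E i) (x i) else x i].
Definition pB d (E : {ffun 'I_d -> 'I_3}) (x : idx d) (i0 j0 : 'I_d) (be : bool) : idx d :=
  [ffun i => if i == i0 then sg (E i) (x i) else if i == j0 then w be (E i) (x i)
             else w false (E i) (x i)].
Definition pC d (E : {ffun 'I_d -> 'I_3}) (x : idx d) (i0 j0 : 'I_d) (ga : bool) : idx d :=
  [ffun i => if i == i0 then w ga (E i) (x i) else if i == j0 then sg (E i) (x i)
             else w true (E i) (x i)].
Definition pD d (E : {ffun 'I_d -> 'I_3}) (x : idx d) (i0 j0 k0 : 'I_d) (be ga ph : bool) : idx d :=
  [ffun i => if i == i0 then w (~~ ga) (E i) (x i) else if i == j0 then w (~~ be) (E i) (x i)
             else if ph && (i == k0) then x i else sg (E i) (x i)].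

Lemma diag d E x (i0 j0 k0 : 'I_d) be ga ph :
  i0 != j0 -> k0 != i0 -> k0 != j0 ->
  let a := pA E x k0 ph in let b := pB E x i0 j0 be in
  let c := pC E x i0 j0 ga in let e := pD E x i0 j0 k0 be ga ph in
  [/\ alldiff a b, alldiff a c & alldiff a e] /\ [/\ alldiff b c, alldiff b e & alldiff c e].
Proof.
move=> ij ki kj /=.
have ji : j0 != i0 by rewrite eq_sym.
have ik : i0 != k0 by rewrite eq_sym.
have jk : j0 != k0 by rewrite eq_sym.
have Hs := (negbTE ij, negbTE ji, negbTE ik, negbTE ki, negbTE jk, negbTE kj).
split; split; apply/forallP => i; rewrite !ffunE;
  (case: (eqVneq i i0) => [->|?]; [|case: (eqVneq i j0) => [->|?]]);
  rewrite ?eqxx ?Hs ?andbF //=;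
  try (case: (ph && (i == k0)));
  by rewrite ?(n1, n1', n2, n2', n3, n3', n4, n4', n5, n5').
Qed.

Lemma pf_pA d (E : {ffun 'I_d -> 'I_3}) (x : idx d) (k0 : 'I_d) ph (i : 'I_d) : pf (E i) (pA E x k0 ph i) = pf (E i) (x i).
Proof. by rewrite ffunE; case: ifP; rewrite ?pf_sg. Qed.
Lemma pf_pB d (E : {ffun 'I_d -> 'I_3}) (x : idx d) (i0 j0 : 'I_d) be i :
  pf (E i) (pB E x i0 j0 be i) = (i != i0) (+) pf (E i) (x i).
Proof.
rewrite ffunE; case: (eqVneq i i0) => [->|ne]; rewrite ?pf_sg //.
by case: ifP => _; rewrite pf_w.
Qed.
Lemma pf_pC d (E : {ffun 'I_d -> 'I_3}) (x : idx d) (i0 j0 : 'I_d) ga i : i0 != j0 ->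
  pf (E i) (pC E x i0 j0 ga i) = (i != j0) (+) pf (E i) (x i).
Proof.
move=> ij; rewrite ffunE; case: (eqVneq i j0) => [->|ne]; first by rewrite eq_sym (negbTE ij) pf_sg.
by case: ifP => _; rewrite ?pf_w ?pf_sg.
Qed.
Lemma pf_pD d (E : {ffun 'I_d -> 'I_3}) (x : idx d) (i0 j0 k0 : 'I_d) be ga ph i :
  pf (E i) (pD E x i0 j0 k0 be ga ph i) = ((i == i0) || (i == j0)) (+) pf (E i) (x i).
Proof.
rewrite ffunE; case: (eqVneq i i0) => [->|ne]; rewrite ?pf_w //.
case: (eqVneq i j0) => [->|ne']; rewrite ?pf_w //.
by case: ifP; rewrite ?pf_sg.
Qed.
Lemma mu_pA d (E : {ffun 'I_d -> 'I_3}) (x : idx d) (k0 : 'I_d) i :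
  muf (E i) (pA E x k0 true i) = ((i == k0) && true) (+) muf (E i) (x i).
Proof. by rewrite ffunE andbT; case: ifP => /= ->; rewrite ?muf_sg. Qed.
Lemma mu_pB d (E : {ffun 'I_d -> 'I_3}) (x : idx d) (i0 j0 : 'I_d) be i : i0 != j0 ->
  muf (E i) (pB E x i0 j0 be i) = ((i == j0) && be) (+) muf (E i) (pB E x i0 j0 false i).
Proof.
move=> ij; rewrite !ffunE; case: (eqVneq i i0) => [->|ne]; first by rewrite (negbTE ij).
by case: ifP => _ //; rewrite !muf_w.
Qed.
Lemma mu_pC d (E : {ffun 'I_d -> 'I_3}) (x : idx d) (i0 j0 : 'I_d) ga i :
  muf (E i) (pC E x i0 j0 ga i) = ((i == i0) && ga) (+) muf (E i) (pC E x i0 j0 false i).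
Proof. by rewrite !ffunE; case: ifP => _ //; rewrite !muf_w. Qed.
Lemma mu_pD d (E : {ffun 'I_d -> 'I_3}) (x : idx d) (i0 j0 k0 : 'I_d) be ga i : k0 != i0 -> k0 != j0 ->
  muf (E i) (pD E x i0 j0 k0 be ga true i) =
  ((i == k0) && true) (+) muf (E i) (pD E x i0 j0 k0 be ga false i).
Proof.
move=> ki kj; rewrite !ffunE; case: (eqVneq i i0) => [->|ne]; first by rewrite eq_sym (negbTE ki).
case: (eqVneq i j0) => [->|ne']; first by rewrite eq_sym (negbTE kj).
case: eqP => _ //=; by rewrite muf_sg negbK.
Qed.

Lemma xorall_mask d (f g P : 'I_d -> bool) :
  (forall i, g i = P i (+) f i) -> xorall g = xorall P (+) xorall f.
Proof. by move=> H; rewrite -xorallD; apply: eq_bigr => i _; rewrite H. Qed.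

Lemma odd_pred n : odd n -> odd n.-1 = false.
Proof. by case: n => //= n /negbTE. Qed.

Lemma odd_case d (A : mat01 d) (E : {ffun 'I_d -> 'I_3}) lam s y (a0 : idx d) :
  3 <= d -> odd d -> ~ quad A -> (forall a, A a = block_perm E lam s a) ->
  inQ s y -> pvec E a0 == y -> A a0 = false ->
  quad (fun a => if a == a0 then true else A a).
Proof.
move=> Hd od nq HA Hy /eqP Hsub H0.
have h0 : 0 < d by lia.
have h1 : 1 < d by lia.
have h2 : 2 < d by lia.
pose i0 := Ordinal h0; pose j0 := Ordinal h1; pose k0 := Ordinal h2.
have ij : i0 != j0 by [].
have ki : k0 != i0 by [].
have kj : k0 != j0 by [].
pose PF (a : idx d) := xorall (fun i => pf (E i) (a i)).
pose MU (a : idx d) := xorall (fun i => muf (E i) (a i)).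
have HA' : forall a, A a = (PF a == s) && (MU a (+) lam (pvec E a) == false).
  by move=> a; rewrite HA.
have PFx : PF a0 = s.
  rewrite /PF (_ : xorall _ = xorall (fun i => y i)); last first.
    by apply: eq_bigr => i _; rewrite -Hsub ffunE.
  by rewrite xorall_card; apply/eqP.
have MUx : MU a0 (+) lam y = true.
  by move: H0; rewrite HA' PFx eqxx -Hsub /=; case: (_ (+) _).
have oddm1 : xorall (fun i : 'I_d => i != i0) = false.
  rewrite xorall_card.
  have -> : #|[set i : 'I_d | i != i0]| = #|[set~ i0]| by apply: eq_card => i; rewrite !inE.
  by rewrite cardsC1 card_ord odd_pred.
have oddm2 : xorall (fun i : 'I_d => i != j0) = false.
  rewrite xorall_card.
  have -> : #|[set i : 'I_d | i != j0]| = #|[set~ j0]| by apply: eq_card => i; rewrite !inE.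
  by rewrite cardsC1 card_ord odd_pred.
have even2 : xorall (fun i : 'I_d => (i == i0) || (i == j0)) = false.
  rewrite xorall_card.
  have -> : #|[set i : 'I_d | (i == i0) || (i == j0)]| = #|[set i0; j0]|.
    by apply: eq_card => i; rewrite !inE.
  by rewrite cards2 ij.
have PFA : forall ph, PF (pA E a0 k0 ph) = s.
  by move=> ph; rewrite -PFx; apply: eq_bigr => i _; rewrite pf_pA.
have PFB : forall be, PF (pB E a0 i0 j0 be) = s.
  by move=> be; rewrite /PF (xorall_mask (fun i => pf_pB E a0 i0 j0 be i)) oddm1 -/(PF a0) PFx.
have PFC : forall ga, PF (pC E a0 i0 j0 ga) = s.
  by move=> ga; rewrite /PF (xorall_mask (fun i => pf_pC E a0 ga i ij)) oddm2 -/(PF a0) PFx.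
have PFD : forall be ga ph, PF (pD E a0 i0 j0 k0 be ga ph) = s.
  by move=> be ga ph; rewrite /PF (xorall_mask (fun i => pf_pD E a0 i0 j0 k0 be ga ph i))
    even2 -/(PF a0) PFx.
have pvA : forall ph, pvec E (pA E a0 k0 ph) = y.
  by move=> ph; rewrite -Hsub; apply/ffunP => i; rewrite /pvec [LHS]ffunE [RHS]ffunE pf_pA.
have pvB : forall be, pvec E (pB E a0 i0 j0 be) = pvec E (pB E a0 i0 j0 false).
  by move=> be; apply/ffunP => i; rewrite /pvec [LHS]ffunE [RHS]ffunE !pf_pB.
have pvC : forall ga, pvec E (pC E a0 i0 j0 ga) = pvec E (pC E a0 i0 j0 false).
  by move=> ga; apply/ffunP => i; rewrite /pvec [LHS]ffunE [RHS]ffunE !pf_pC.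
have pvD : forall be ga ph, pvec E (pD E a0 i0 j0 k0 be ga ph) = pvec E (pD E a0 i0 j0 k0 be ga false).
  by move=> be ga ph; apply/ffunP => i; rewrite /pvec [LHS]ffunE [RHS]ffunE !pf_pD.
pose be := MU (pB E a0 i0 j0 false) (+) lam (pvec E (pB E a0 i0 j0 false)).
pose ga := MU (pC E a0 i0 j0 false) (+) lam (pvec E (pC E a0 i0 j0 false)).
have AB : A (pB E a0 i0 j0 be).
  rewrite HA' PFB eqxx /= pvB /MU (xorall_tog (fun i => mu_pB E a0 be i ij)).
  by rewrite -/(MU _) -addbA /be addbb.
have AC : A (pC E a0 i0 j0 ga).
  rewrite HA' PFC eqxx /= pvC /MU (xorall_tog (fun i => mu_pC E a0 i0 j0 ga i)).
  by rewrite -/(MU _) -addbA /ga addbb.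
have [/= Dab [Dbc Dbe Dce]] := diag E a0 be ga true ij ki kj.
have [/= Dab0 [_ Dbe0 Dce0]] := diag E a0 be ga false ij ki kj.
have pA0 : pA E a0 k0 false = a0 by apply/ffunP => i; rewrite ffunE.
case AD : (A (pD E a0 i0 j0 k0 be ga false)).
  exists a0, (pB E a0 i0 j0 be), (pC E a0 i0 j0 ga), (pD E a0 i0 j0 k0 be ga false).
  rewrite eqxx AB AC AD !if_same; rewrite pA0 in Dab0.
  by case: Dab0.
exfalso; apply: nq.
exists (pA E a0 k0 true), (pB E a0 i0 j0 be), (pC E a0 i0 j0 ga), (pD E a0 i0 j0 k0 be ga true).
split => //; split => //.
- rewrite HA' PFA eqxx pvA /MU (xorall_tog (fun i => mu_pA E a0 k0 i)) -/(MU _).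
  by rewrite -addbA MUx.
- move: AD; rewrite !HA' !PFD eqxx. rewrite (pvD be ga true) /MU (xorall_tog (fun i => mu_pD E a0 be ga i ki kj)).
  by rewrite -/(MU _) /=; case: (MU _); case: (lam _).
Qed.

Unset Implicit Arguments.

Theorem mainTheorem10 (d : nat) (A : mat01 d)
  (E : {ffun 'I_d -> 'I_3}) (lam : {ffun 'I_d -> bool} -> bool) (s : bool)
  (y : {ffun 'I_d -> bool}) (a0 : idx d) :
  3 <= d ->
  equiv_mat (M4 d) A ->
  (forall a, A a = block_perm E lam s a) ->
  inQ s y ->
  subcube E y a0 ->
  A a0 = false ->
  0 < per (fun a => if a == a0 then true else A a).
Proof.
move=> Hd Heq HA Hy Hsub H0.
have d0 : 0 < d by lia.
apply: quad_per d0 _.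
case od : (odd d).
  apply: (odd_case Hd od _ HA Hy Hsub H0) => qA.
  by apply: (M4_odd_noquad od); apply/(equiv_quad Heq).
have [a [b [c [e [[Ba Bb Bc Be] H1 H2]]]]] := (equiv_quad Heq).1 (M4_even_quad (negbT od)).
by exists a, b, c, e; split => //; split; case: ifP.
Qed.
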